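(* The topological graph $\mathbb G$ is hereditarily unicoherent: for every two closed connected subsets $P,Q\subseteq V(\mathbb G)$, the intersection $P\cap Q$ is connected.
   Context: A graph is a pair $A=(V(A),E(A))$ with $E(A)\subseteq V(A)^2$ reflexive and symmetric; a topological graph additionally has $V$ compact, second countable, zero-dimensional and $E$ closed. Epimorphisms are (continuous) edge-preserving maps surjective on vertices and edges. A vertex set $S$ is disconnected if there are nonempty closed subsets $P,Q$ of $S$ with $P\cup Q=S$ and no edge $\langle a,b\rangle$ with $a\in P$, $b\in Q$; otherwise connected (the empty set counts as connected); components are maximal connected subsets. An epimorphism $f\colon A\to B$ is confluent if for every connected $Q\subseteq V(B)$ each component $C$ of $f^{-1}(Q)$ has $f(C)=Q$. $\mathbb G$ is the projective Fraïssé limit of the class of finite connected graphs with confluent epimorphisms: the unique topological graph such that (1) every finite connected graph is a confluent epimorphic image of $\mathbb G$; (2) for finite connected $A,B$ and confluent epimorphisms $f\colon\mathbb G\to A$, $g\colon B\to A$ there is a confluent epimorphism $h\colon\mathbb G\to B$ with $f=g\circ h$; (3) for each $\varepsilon>0$ some confluent epimorphism from $\mathbb G$ onto a finite connected graph has all point-preimages of diameter $<\varepsilon$. *)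

(* Defs.v *)
From HB Require Import structures.
From mathcomp Require Import all_boot all_order all_algebra.
From mathcomp Require Import all_classical all_reals all_analysis.
Set Implicit Arguments. Unset Strict Implicit. Unset Printing Implicit Defensive.
Import Order.TTheory GRing.Theory Num.Theory.
Local Open Scope classical_set_scope.
Local Open Scope ring_scope.

(* [cl] is the class of closed subsets of the ambient vertex space:
   [closed] for a topological graph, every set ([fun _ => True]) for a finite
   (discrete) graph. *)

Definition rel_closed {T : Type} (cl : set T -> Prop) (S P : set T) : Prop :=
  exists X, cl X /\ P = S `&` X.

Definition gdisconnected {T : Type} (cl : set T -> Prop) (E : set (T * T))
  (S : set T) : Prop :=
  exists P Q : set T,
    [/\ rel_closed cl S P, rel_closed cl S Q, P !=set0, Q !=set0
      & P `|` Q = S /\ (forall a b, P a -> Q b -> ~ E (a, b))].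

(* connected (the empty set is connected) *)
Definition gconnected {T : Type} (cl : set T -> Prop) (E : set (T * T))
  (S : set T) : Prop := ~ gdisconnected cl E S.

Definition gcomponent {T : Type} (cl : set T -> Prop) (E : set (T * T))
  (S C : set T) : Prop :=
  [/\ C `<=` S, gconnected cl E C &
      forall D, C `<=` D -> D `<=` S -> gconnected cl E D -> D = C].

Definition epimorphism {T U : Type} (E : set (T * T)) (F : set (U * U))
  (f : T -> U) : Prop :=
  [/\ (forall x y, E (x, y) -> F (f x, f y)),
      (forall u, exists x, f x = u) &
      (forall u v, F (u, v) -> exists x y, [/\ E (x, y), f x = u & f y = v])].

Definition confluent {T U : Type} (clT : set T -> Prop) (E : set (T * T))
  (clU : set U -> Prop) (F : set (U * U)) (f : T -> U) : Prop :=
  forall Q : set U, gconnected clU F Q ->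
  forall C : set T, gcomponent clT E (f @^-1` Q) C -> f @` C = Q.

Definition fedges {A : finType} (eA : rel A) : set (A * A) :=
  [set p | eA p.1 p.2].

Definition discr {A : Type} : set A -> Prop := fun _ => True.

Definition fin_conn_graph (A : finType) (eA : rel A) : Prop :=
  [/\ (0 < #|A|)%N, reflexive eA, symmetric eA &
      gconnected discr (fedges eA) setT].

Definition fconf_epi (B A : finType) (eB : rel B) (eA : rel A) (g : B -> A) : Prop :=
  epimorphism (fedges eB) (fedges eA) g /\
  confluent discr (fedges eB) discr (fedges eA) g.

Definition clopen_basis (T : topologicalType) : Prop :=
  exists B : set (set T), basis B /\ B `<=` clopen.

Definition top_graph (T : topologicalType) (E : set (T * T)) : Prop :=
  [/\ compact [set: T], hausdorff_space T, second_countable (T := T),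
      clopen_basis T &
      [/\ closed E, (forall x, E (x, x)) & (forall x y, E (x, y) -> E (y, x))]].

(* continuous confluent epimorphism from a topological graph onto a finite graph
   (continuity into the discrete topology of A) *)
Definition tconf_epi (T : topologicalType) (E : set (T * T))
  (A : finType) (eA : rel A) (f : T -> A) : Prop :=
  [/\ forall U : set A, open (f @^-1` U),
      epimorphism E (fedges eA) f &
      confluent closed E discr (fedges eA) f].

(* V carries a (pseudo)metric compatible with its topology; "diam X < eps" is
   expressed as: all pairs of points of X lie within some distance e' < eps. *)
Definition is_Fraisse_G (R : realType) (V : pseudoMetricType R)
  (E : set (V * V)) : Prop :=
  [/\ top_graph E,
      (forall (A : finType) (eA : rel A), fin_conn_graph eA ->
         exists f : V -> A, tconf_epi E eA f),
      (forall (A B : finType) (eA : rel A) (eB : rel B) (f : V -> A) (g : B -> A),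
         fin_conn_graph eA -> fin_conn_graph eB ->
         tconf_epi E eA f -> fconf_epi eB eA g ->
         exists h : V -> B, tconf_epi E eB h /\ f = g \o h) &
      (forall eps : R, 0 < eps ->
         exists (A : finType) (eA : rel A) (f : V -> A),
           [/\ fin_conn_graph eA, tconf_epi E eA f &
               forall a : A, exists2 e' : R, e' < eps &
                 forall x y, f x = a -> f y = a -> ball x e' y])].

(* Main.v *)
Require Import Defs.
From HB Require Import structures.
From mathcomp Require Import all_boot all_order all_algebra.
From mathcomp Require Import all_classical all_reals all_analysis.
Import Order.TTheory GRing.Theory Num.Theory.
Local Open Scope classical_set_scope.
Local Open Scope ring_scope.
From mathcomp Require Import lra.

Lemma dconn_edge {T : Type} (E : set (T * T)) (S I : set T) :
  gconnected discr E S -> I `<=` S -> I !=set0 -> (S `\` I) !=set0 ->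
  exists x y, [/\ I x, S y, ~ I y & E (x, y)].
Proof.
move=> Sc IS I0 SI0; apply: contrapT => H; apply: Sc.
exists I, (S `\` I); split => //.
- by exists I; split => //; rewrite setIidr.
- by exists (~` I); split => //.
- split; first exact: setDUK.
  move=> a b Ia [Sb nIb] Eab; apply: H; by exists a, b.
Qed.

Lemma dconn_single {T : Type} (E : set (T * T)) (x : T) :
  E (x, x) -> gconnected discr E [set x].
Proof.
move=> Exx [X [Y [_ _ [a Xa] [b Yb] [XY nE]]]].
have ha : [set x] a by rewrite -XY; left.
have hb : [set x] b by rewrite -XY; right.
rewrite /= in ha hb; subst a b.
exact: (nE x x Xa Yb Exx).
Qed.

Lemma dconn_add {T : Type} (E : set (T * T)) (C : set T) (c v : T) :
  gconnected discr E C -> C c -> E (c, v) -> E (v, c) ->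
  gconnected discr E (C `|` [set v]).
Proof.
move=> Cc Cc0 Ecv Evc [X [Y [_ _ [a Xa] [b Yb] [XY nE]]]].
have sub : forall z, (C `|` [set v]) z -> X z \/ Y z by move=> z; rewrite -XY.
have sub2 : forall z, X z -> (C `|` [set v]) z by move=> z Xz; rewrite -XY; left.
have sub3 : forall z, Y z -> (C `|` [set v]) z by move=> z Yz; rewrite -XY; right.
have [[x1 [Xx1 Cx1]]|nX] := pselect ((X `&` C) !=set0); last first.
  have Yc : Y c.
    case: (sub c (or_introl Cc0)) => // Xc; exfalso; apply: nX; by exists c.
  case: (sub2 a Xa) => [Ca|/= av].
    exfalso; apply: nX; by exists a.
  subst a; exact: (nE v c Xa Yc Evc).
have [[y1 [Yy1 Cy1]]|nY] := pselect ((Y `&` C) !=set0); last first.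
  have Xc : X c.
    case: (sub c (or_introl Cc0)) => // Yc; exfalso; apply: nY; by exists c.
  case: (sub3 b Yb) => [Cb|/= bv].
    exfalso; apply: nY; by exists b.
  subst b; exact: (nE c v Xc Yb Ecv).
apply: Cc; exists (X `&` C), (Y `&` C); split.
- by exists X; split => //; rewrite setIC.
- by exists Y; split => //; rewrite setIC.
- by exists x1.
- by exists y1.
- split.
    apply/seteqP; split => z.
      by case=> -[].
    move=> Cz; case: (sub z (or_introl Cz)) => H; [left|right]; by split.
  move=> p q [Xp _] [Yq _]; exact: nE.
Qed.

Lemma dconn_const {T : Type} (E : set (T * T)) (S : set T) (s : T -> bool) :
  gconnected discr E S ->
  (forall x y, S x -> S y -> E (x, y) -> s x = s y) ->
  forall x y, S x -> S y -> s x = s y.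
Proof.
move=> Sc H x y Sx Sy; apply: contrapT => nxy; apply: Sc.
exists (S `&` [set z | s z = s x]), (S `&` [set z | s z = ~~ s x]); split.
- by exists [set z | s z = s x].
- by exists [set z | s z = ~~ s x].
- by exists x.
- exists y; split => //=; move: nxy; by case: (s y); case: (s x) => //=; move=> h; exfalso; apply: h.
- split.
    apply/seteqP; split => z; first by case=> -[].
    move=> Sz; case hz: (s z == s x); [left|right]; split => //; first exact/eqP.
    by rewrite /=; move: hz; case: (s z); case: (s x).
  move=> p q [Sp sp] [Sq sq] Epq.
  have := H p q Sp Sq Epq; rewrite sp sq; by case: (s x).
Qed.

Lemma fiber_closed (V : topologicalType) (s : V -> bool) :
  (forall bb, open [set z | s z = bb]) -> forall bb, closed [set z | s z = bb].
Proof.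
move=> op bb.
have -> : [set z | s z = bb] = ~` [set z | s z = ~~ bb].
  apply/seteqP; split => z /=; by case: (s z); case: bb.
exact: open_closedC.
Qed.

Lemma tconn_const (V : topologicalType) (E : set (V * V)) (S : set V) (s : V -> bool) :
  gconnected closed E S -> (forall bb, open [set z | s z = bb]) ->
  (forall x y, S x -> S y -> E (x, y) -> s x = s y) ->
  forall x y, S x -> S y -> s x = s y.
Proof.
move=> Sc op H x y Sx Sy; apply: contrapT => nxy; apply: Sc.
exists (S `&` [set z | s z = s x]), (S `&` [set z | s z = ~~ s x]); split.
- by exists [set z | s z = s x]; split => //; exact: fiber_closed.
- by exists [set z | s z = ~~ s x]; split => //; exact: fiber_closed.
- by exists x.
- exists y; split => //=; move: nxy; by case: (s y); case: (s x) => //=; move=> h; exfalso; apply: h.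
- split.
    apply/seteqP; split => z; first by case=> -[].
    move=> Sz; case hz: (s z == s x); [left|right]; split => //; first exact/eqP.
    by rewrite /=; move: hz; case: (s z); case: (s x).
  move=> p q [Sp sp] [Sq sq] Epq.
  have := H p q Sp Sq Epq; rewrite sp sq; by case: (s x).
Qed.

Definition cphi {A : Type} (pP pQ w : A -> bool) (x y : A) : bool :=
  if pP x && pP y then false else if pQ x && pQ y then w x (+) w y else false.

Lemma cphi_xx {A : Type} (pP pQ w : A -> bool) x : cphi pP pQ w x x = false.
Proof. rewrite /cphi; case: (pP x) => //=; case: (pQ x) => //=; exact: addbb. Qed.

Lemma cphi_sym {A : Type} (pP pQ w : A -> bool) x y :
  cphi pP pQ w x y = cphi pP pQ w y x.
Proof. by rewrite /cphi andbC [pQ y && _]andbC addbC. Qed.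

Lemma core (V : topologicalType) (E : set (V * V)) (P Q : set V) (A : Type)
  (f : V -> A) (pP pQ w : A -> bool) (tau : V -> bool) :
  gconnected closed E P -> gconnected closed E Q ->
  (forall z, P z -> pP (f z)) -> (forall z, Q z -> pQ (f z)) ->
  (forall z z', Q z -> Q z' -> E (z, z') -> pP (f z) -> pP (f z') ->
     w (f z) = w (f z')) ->
  forall a b, P a -> Q a -> P b -> Q b -> w (f a) = false -> w (f b) = true ->
  (forall bb, open [set z | tau z = bb]) ->
  (forall bb, open [set z | tau z (+) w (f z) = bb]) ->
  (forall z z', E (z, z') -> tau z' = tau z (+) cphi pP pQ w (f z) (f z')) ->
  False.
Proof.
move=> cP cQ hP hQ hw a b Pa Qa Pb Qb wa wb op1 op2 coc.
have h1 : tau a = tau b.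
  apply: (@tconn_const _ _ _ _ cP op1 _ _ _ Pa Pb) => z z' Pz Pz' Ez.
  by rewrite (coc z z' Ez) /cphi (hP z Pz) (hP z' Pz') addbF.
have h2 : tau a (+) w (f a) = tau b (+) w (f b).
  apply: (@tconn_const _ _ _ (fun z => tau z (+) w (f z)) cQ op2 _ _ _ Qa Qb) => z z' Qz Qz' Ez.
  rewrite (coc z z' Ez) /cphi (hQ z Qz) (hQ z' Qz') /=.
  case: ifP => [/andP[p1 p2]|_].
    by rewrite addbF (hw z z' Qz Qz' Ez p1 p2).
  by case: (tau z); case: (w (f z)); case: (w (f z')).
move: h2; rewrite h1 wa wb; by case: (tau b).
Qed.

Definition crel {A : finType} (eA : rel A) (pP pQ w : A -> bool) : rel (A * bool) :=
  fun u v => eA u.1 v.1 && (v.2 == u.2 (+) cphi pP pQ w u.1 v.1).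

Lemma crel_refl {A : finType} (eA : rel A) pP pQ w :
  reflexive eA -> reflexive (crel eA pP pQ w).
Proof. by move=> rA u; rewrite /crel rA cphi_xx addbF eqxx. Qed.

Lemma crel_sym {A : finType} (eA : rel A) pP pQ w :
  symmetric eA -> symmetric (crel eA pP pQ w).
Proof.
move=> sA u v; rewrite /crel sA cphi_sym; congr (_ && _).
by case: (u.2); case: (v.2); case: (cphi _ _ _ _ _).
Qed.

Lemma cover_conf (A : finType) (eA : rel A) pP pQ w :
  reflexive eA -> symmetric eA ->
  fconf_epi (crel eA pP pQ w) eA fst.
Proof.
move=> rA sA; split.
  split.
  - by move=> u v /andP[].
  - by move=> x; exists (x, false).
  - move=> x y Exy; exists (x, false), (y, cphi pP pQ w x y); split => //.
    by rewrite /fedges /crel /= Exy eqxx.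
move=> Q0 cQ0 C [CS cC maxC].
apply/seteqP; split.
  by move=> x [u Cu <-]; exact: CS u Cu.
move=> x Q0x.
have [c Cc] : C !=set0.
  apply: contrapT => nC.
  have C0 : C = set0 by apply/seteqP; split => // z Cz; apply: nC; exists z.
  have E0 : fedges (crel eA pP pQ w) ((x, false), (x, false)).
    by rewrite /fedges /= crel_refl.
  have H : [set (x, false)] = C.
    apply: maxC; [by rewrite C0 | by move=> z -> | exact: dconn_single E0].
  have : [set (x, false)] (x, false) by [].
  by rewrite H C0.
apply: contrapT => nx.
have IS : fst @` C `<=` Q0 by move=> z [u Cu <-]; exact: CS u Cu.
have I0 : (fst @` C) !=set0 by exists c.1, c.
have D0 : (Q0 `\` fst @` C) !=set0 by exists x.
have [x1 [y1 [I1 Sy1 nIy1 E1]]] := @dconn_edge _ _ _ _ cQ0 IS I0 D0.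
case: I1 => u Cu ux1.
pose v := (y1, u.2 (+) cphi pP pQ w x1 y1).
have Euv : crel eA pP pQ w u v by rewrite /crel /= ux1 E1 eqxx.
have Evu : crel eA pP pQ w v u by rewrite crel_sym.
have := maxC (C `|` [set v]) (@subsetUl _ _ _) _ (@dconn_add _ _ _ _ _ cC Cu Euv Evu).
move=> H.
  apply: nIy1; exists v => //; rewrite -H; last first.
  by move=> z [Cz| ->]; [exact: CS|exact: Sy1].
by right.
Qed.

Lemma cover_conn (V : topologicalType) (E : set (V * V)) (P Q : set V)
  (A : finType) (eA : rel A) (f : V -> A) (pP pQ w : A -> bool) :
  fin_conn_graph eA -> (forall U : set A, open (f @^-1` U)) ->
  (forall x y, E (x, y) -> eA (f x) (f y)) ->
  gconnected closed E P -> gconnected closed E Q ->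
  (forall z, P z -> pP (f z)) -> (forall z, Q z -> pQ (f z)) ->
  (forall z z', Q z -> Q z' -> E (z, z') -> pP (f z) -> pP (f z') ->
     w (f z) = w (f z')) ->
  forall a b, P a -> Q a -> P b -> Q b -> w (f a) = false -> w (f b) = true ->
  fin_conn_graph (crel eA pP pQ w).
Proof.
move=> [Apos rA sA cA] fo fE cP cQ hP hQ hw a b Pa Qa Pb Qb wa wb.
split.
- have [x0 _] := card_gt0P Apos.
  by apply/card_gt0P; exists (x0, false).
- exact: crel_refl.
- exact: crel_sym.
move=> [X [Y [_ _ [xX Xx] [yY Yy] [XY nE]]]].
pose chi u := `[< X u >].
have XorY u : X u \/ Y u by have : (X `|` Y) u by rewrite XY.
have nb u : X u -> Y u -> False.
  by move=> Xu Yu; apply: (nE u u Xu Yu); rewrite /fedges /= crel_refl.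
have prop x y s : eA x y -> chi (y, s (+) cphi pP pQ w x y) = chi (x, s).
  move=> exy.
  have e1 : crel eA pP pQ w (x, s) (y, s (+) cphi pP pQ w x y).
    by rewrite /crel /= exy eqxx.
  have e2 : crel eA pP pQ w (y, s (+) cphi pP pQ w x y) (x, s) by rewrite crel_sym.
  rewrite /chi; case: (asboolP (X (x, s))) => h1;
    case: (asboolP (X (y, s (+) cphi pP pQ w x y))) => h2 //.
  - case: (XorY (y, s (+) cphi pP pQ w x y)) => // Yy'.
    by exfalso; apply: (nE _ _ h1 Yy'); exact: e1.
  - case: (XorY (x, s)) => // Yx.
    by exfalso; apply: (nE _ _ h2 Yx); exact: e2.
pose al x := chi (x, false).
pose be x := chi (x, true).
have step x y : eA x y ->
    (al y = al x /\ be y = be x) \/ (al y = be x /\ be y = al x).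
  move=> exy; case hp: (cphi pP pQ w x y); [right|left]; rewrite /al /be.
  - split.
      by rewrite -(prop x y true exy) hp.
    by rewrite -(prop x y false exy) hp.
  - split.
      by rewrite -(prop x y false exy) hp.
    by rewrite -(prop x y true exy) hp.
have cconst x y : (al x == be x) = (al y == be y).
  apply: (@dconn_const _ _ setT (fun x => al x == be x) cA) => // p q _ _ epq.
  by case: (step p q epq) => -[-> ->] //; rewrite eq_sym.
case hk: (al xX.1 == be xX.1).
  have aeqb x : al x = be x by apply/eqP; rewrite (cconst x xX.1).
  have aconst x y : al x = al y.
    apply: (@dconn_const _ _ setT al cA) => // p q _ _ epq.
    by case: (step p q epq) => -[-> _] //; rewrite aeqb.
  have alX : al xX.1 = true.
    case: xX Xx {hk} => x1 [] Xx /=.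
      by rewrite aeqb /be /chi; apply/asboolP.
    by rewrite /al /chi; apply/asboolP.
  apply: (nb yY) => //.
  case: yY Yy => y1 t Yy.
  case: t {Yy}.
    have : be y1 = true by rewrite -aeqb (aconst y1 xX.1).
    by rewrite /be /chi => /asboolP.
  have : al y1 = true by rewrite (aconst y1 xX.1).
  by rewrite /al /chi => /asboolP.
have bx x : be x = ~~ al x.
  move: (cconst x xX.1); rewrite hk.
  by case: (al x); case: (be x).
apply: (@core _ E P Q A f pP pQ w (fun z => al (f z)) cP cQ hP hQ hw a b
          Pa Qa Pb Qb wa wb).
- move=> bb; exact: (fo [set x | al x = bb]).
- move=> bb; exact: (fo [set x | al x (+) w x = bb]).
move=> z z' Ez.
have ez := fE z z' Ez.
have := prop (f z) (f z') false ez.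
rewrite /= -/(al (f z)).
case: (cphi pP pQ w (f z) (f z')) => /=.
  by rewrite -/(be (f z')) bx => <-; rewrite addbT negbK.
by rewrite -/(al (f z')) addbF.
Qed.
Lemma unif (R : realType) (V : pseudoMetricType R) (K : set V) (S : R -> V -> Prop) :
 compact K -> (forall e e' x, 0 < e -> e <= e' -> S e' x -> S e x) ->
 (forall x, K x -> exists2 e, 0 < e & \forall y \near x, S e y) ->
 exists2 e, 0 < e & forall x, K x -> S e x.
Proof.
move=> /compact_near_coveringP cK mono loc.
have : \forall i \near (0:R)^'+, K `<=` S i.
  apply: cK => x Kx.
  have [e e0 ne] := loc x Kx.
  near=> y i.
  apply: (mono i e) => //.
  - near: i; exact: nbhs_right_le.
  - rewrite /=; near: y; exact: ne.
move=> H.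
have [i [Hi ipos]] : exists i, (K `<=` S i) /\ 0 < i.
  have : \forall i \near (0:R)^'+, (K `<=` S i) /\ 0 < i.
    near=> i. split. near: i; exact: H. near: i; exact: nbhs_right_gt.
  move=> Hn; case: (@filter_ex _ _ (at_right_proper_filter 0) _ Hn) => i Hi; by exists i.
by exists i.
Unshelve. all: end_near. Qed.

Theorem mainTheorem14 (R : realType) (V : pseudoMetricType R) (E : set (V * V)) :
  is_Fraisse_G E ->
  forall P Q : set V, closed P -> closed Q ->
    gconnected closed E P -> gconnected closed E Q ->
    gconnected closed E (P `&` Q).
Proof.
move=> [[cptT _ _ _ [clE Erefl Esym]] _ F2 F3] P Q clP clQ cP cQ.
move=> [A1 [B1 [[X1 [clX1 HA1]] [X2 [clX2 HB1]] [a Aa] [b Bb] [Hun Hsep]]]].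
have DA : A1 `<=` P `&` Q by rewrite HA1 => z [].
have DB : B1 `<=` P `&` Q by rewrite HB1 => z [].
have clA1 : closed A1 by rewrite HA1; apply: closedI => //; apply: closedI.
have clB1 : closed B1 by rewrite HB1; apply: closedI => //; apply: closedI.
have cA1 : compact A1 by apply: (subclosed_compact clA1 cptT).
have cB1 : compact B1 by apply: (subclosed_compact clB1 cptT).
have cPc : compact P by apply: (subclosed_compact clP cptT).
have oE : open (~` E) by rewrite -closedC setCK.
have oQ : open (~` Q) by rewrite -closedC setCK.
have [r r0 Sep] : exists2 r : R, 0 < r & forall x, A1 x -> forall y, B1 y ->
    forall u v, ball x r u -> ball y r v -> ~ E (u, v).
  have inner x : A1 x -> exists2 e : R, 0 < e & forall y, B1 y ->
      forall a' u v, ball x e a' -> ball a' e u -> ball y e v -> ~ E (u, v).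
    move=> Ax.
    apply: (@unif R V B1 (fun e y => forall a' u v, ball x e a' -> ball a' e u ->
        ball y e v -> ~ E (u, v)) cB1).
      move=> e e' y e0 ee' H a' u v h1 h2 h3; apply: (H a' u v);
        exact: (le_ball ee').
    move=> y By.
    have nxy : (~` E) (x, y) by exact: Hsep.
    have /nbhs_ballP [e e0 He] := open_nbhs_nbhs (conj oE nxy).
    have e30 : 0 < e / 3 by rewrite divr_gt0.
    exists (e / 3) => //.
    near=> y' => a' u v h1 h2 h3.
    apply: (He (u, v)); split => /=.
      apply: (le_ball (e1 := e / 3 + e / 3)); last exact: ball_triangle h1 h2.
      by lra.
    have hy : ball y (e / 3) y' by near: y'; exact: nbhsx_ballx.
    apply: (le_ball (e1 := e / 3 + e / 3)); last exact: ball_triangle hy h3.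
    by lra.
  have [r r0 Hr] : exists2 r : R, 0 < r & forall x, A1 x -> forall y, B1 y ->
      forall u v, ball x r u -> ball y r v -> ~ E (u, v).
    apply: (@unif R V A1 (fun e x => forall y, B1 y ->
      forall u v, ball x e u -> ball y e v -> ~ E (u, v)) cA1).
      move=> e e' x e0 ee' H y By u v h2 h3; apply: (H y By u v);
        exact: (le_ball ee').
    move=> x Ax; have [e e0 He] := inner x Ax.
    exists e => //; near=> x' => y By u v h2 h3.
    apply: (He y By x' u v) => //.
    by near: x'; exact: nbhsx_ballx.
  by exists r.
have r20 : 0 < r / 2 by rewrite divr_gt0.
have [dl dl0 Cl] : exists2 d : R, 0 < d & forall p, P p ->
    (exists c, (P `&` Q) c /\ ball c (r / 2) p) \/ (forall q, Q q -> ~ ball p d q).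
  apply: (@unif R V P (fun d p => (exists c, (P `&` Q) c /\ ball c (r / 2) p) \/
      (forall q, Q q -> ~ ball p d q)) cPc).
    move=> e e' p e0 ee' [H|H]; [by left|right] => q Qq hb.
    by apply: (H q Qq); exact: (le_ball ee').
  move=> p Pp; case: (pselect (Q p)) => Qp.
    exists 1 => //; near=> p'; left; exists p; split => //.
    by near: p'; exact: nbhsx_ballx.
  have /nbhs_ballP [e e0 He] := open_nbhs_nbhs (conj oQ Qp).
  have e20 : 0 < e / 2 by rewrite divr_gt0.
  exists (e / 2) => //; near=> p'; right => q Qq hb.
  have hp : ball p (e / 2) p' by near: p'; exact: nbhsx_ballx.
  apply: (He q) => //.
  apply: (le_ball (e1 := e / 2 + e / 2)); last exact: ball_triangle hp hb.
  by lra.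
pose eps := Num.min dl (r / 2).
have eps0 : 0 < eps by rewrite lt_min dl0 r20.
have [A [eA [f [fcg tce fib]]]] := F3 eps eps0.
have [fo [fE _ _] _] := tce.
have [_ rA sA _] := fcg.
pose NA u := exists a', A1 a' /\ ball a' r u.
pose NB u := exists b', B1 b' /\ ball b' r u.
have SepN u v : E (u, v) -> NA u -> NB v -> False.
  by move=> Euv [a' [Aa' ha]] [b' [Bb' hb]]; exact: (Sep a' Aa' b' Bb' u v ha hb).
have notboth u : NA u -> NB u -> False by apply: SepN; exact: Erefl.
have fiber p q : P p -> Q q -> f p = f q ->
    (forall u, f u = f p -> NA u) \/ (forall u, f u = f p -> NB u).
  move=> Pp Qq fpq; have [e' e'lt He'] := fib (f p).
  have bpq : ball p e' q := He' p q erefl (esym fpq).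
  case: (Cl p Pp) => [[c [Dc bc]]|H]; last first.
    exfalso; apply: (H q Qq); apply: (le_ball _ bpq).
    by apply: (le_trans (ltW e'lt)); rewrite ge_min lexx.
  have e'r : e' <= r / 2.
    by apply: (le_trans (ltW e'lt)); rewrite ge_min lexx orbT.
  have hc : forall u, f u = f p -> ball c r u.
    move=> u fu; apply: (le_ball (e1 := r / 2 + e')).
      by lra.
    exact: ball_triangle bc (He' p u erefl fu).
  have : (A1 `|` B1) c by rewrite Hun.
  by case=> [Ac|Bc]; [left|right] => u fu; exists c; split => //; exact: hc.
pose pP x := `[< exists p, P p /\ f p = x >].
pose pQ x := `[< exists q, Q q /\ f q = x >].
pose w x := `[< exists u, f u = x /\ NB u >].
have hP z : P z -> pP (f z) by move=> Pz; apply/asboolP; exists z.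
have hQ z : Q z -> pQ (f z) by move=> Qz; apply/asboolP; exists z.
have wtrue p q : P p -> Q q -> f p = f q -> w (f p) = true ->
    forall u, f u = f p -> NB u.
  move=> Pp Qq fpq wt; case: (fiber p q Pp Qq fpq) => // HA.
  move/asboolP: wt => [u0 [fu0 NBu0]].
  by exfalso; apply: (notboth u0) => //; exact: HA.
have wfalse p q : P p -> Q q -> f p = f q -> w (f p) = false ->
    forall u, f u = f p -> NA u.
  move=> Pp Qq fpq wf; case: (fiber p q Pp Qq fpq) => // HB.
  move: wf; have -> // : w (f p) = true.
  by apply/asboolP; exists p; split => //; exact: HB.
have [Pa Qa] := DA a Aa.
have [Pb Qb] := DB b Bb.
have wa : w (f a) = false.
  case hw: (w (f a)) => //.
  have NBa := wtrue a a Pa Qa erefl hw a erefl.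
  by exfalso; apply: (notboth a) => //; exists a; split => //; exact: ballxx.
have wb : w (f b) = true.
  by apply/asboolP; exists b; split => //; exists b; split => //; exact: ballxx.
have hw z z' : Q z -> Q z' -> E (z, z') -> pP (f z) -> pP (f z') ->
    w (f z) = w (f z').
  move=> Qz Qz' Ez /asboolP [p [Pp fpz]] /asboolP [p' [Pp' fpz']].
  case h1: (w (f z)); case h2: (w (f z')) => //.
    rewrite -fpz in h1; rewrite -fpz' in h2.
    have NBz := wtrue p z Pp Qz fpz h1 z (esym fpz).
    have NAz' := wfalse p' z' Pp' Qz' fpz' h2 z' (esym fpz').
    by exfalso; apply: (SepN z' z (Esym _ _ Ez) NAz' NBz).
  rewrite -fpz in h1; rewrite -fpz' in h2.
  have NAz := wfalse p z Pp Qz fpz h1 z (esym fpz).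
  have NBz' := wtrue p' z' Pp' Qz' fpz' h2 z' (esym fpz').
  by exfalso; apply: (SepN z z' Ez NAz NBz').
have fcgB := @cover_conn V E P Q A eA f pP pQ w fcg fo fE cP cQ hP hQ hw a b
  Pa Qa Pb Qb wa wb.
have [h [[ho [hE _ _] _] fh]] := F2 A (A * bool)%type eA
  (crel eA pP pQ w) f fst fcg fcgB tce
  (@cover_conf A eA pP pQ w rA sA).
apply: (@core _ E P Q A f pP pQ w (fun z => (h z).2) cP cQ hP hQ hw a b
          Pa Qa Pb Qb wa wb).
- move=> bb; exact: (ho [set u | u.2 = bb]).
- move=> bb; rewrite fh; exact: (ho [set u | u.2 (+) w u.1 = bb]).
move=> z z' Ez.
have := hE _ _ Ez; rewrite /fedges /crel /= fh /=.
by move=> /andP [_ /eqP ->].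
Unshelve. all: end_near. Qed.
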